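(* For an auto-regressive generative model producing its output over $R$ rounds with per-round models $h_1,\dots,h_R$, the cumulative error satisfies \[ L(h_R) := \sum_{r=1}^{R}\lambda_r L_{r}(h_{r}) \leq \sum_{i=1}^R \Lambda_i \left( \hat{L}_{m,i}(h_{i}) + \epsilon_i \right), \] where $G_{r,i}=\lambda_r\prod_{j=i+1}^{r}\gamma_j$ and $\Lambda_i=\sum_{r=i}^{R}G_{r,i}$.
   Context: For round $r$, $L_r(h_r)=\mathbb{E}_{(x^{(r)},y^{(r)})\sim\mathcal{D}^{(r)}}[\ell(h_r(x^{(r)}),y^{(r)})]$ is the expected loss of the round-$r$ output with respect to the expected output, $\hat{L}_{m,r}(h_r)$ is the empirical loss computed on $m$ samples, and $\epsilon_r\ge0$ is the generalization term of round $r$. The constants $\gamma_r\ge 0$ quantify the impact of errors from round $r-1$ on round $r$, in the sense that $L_r(h_r)\le \hat{L}_{m,r}(h_r)+\epsilon_r+\gamma_r L_{r-1}(h_{r-1})$ for each $r$ (with no previous-round term for $r=1$). The weights $\lambda_r\ge 0$ satisfy $\sum_{r=1}^R\lambda_r=1$. Empty products equal $1$. *)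

(* Defs.v *)
From mathcomp Require Import all_boot all_order all_algebra.
Set Implicit Arguments. Unset Strict Implicit. Unset Printing Implicit Defensive.
Import Order.TTheory GRing.Theory Num.Theory.
Local Open Scope ring_scope.

(* Rounds are indexed by natural numbers 1..R. *)

Definition Gcoef (R : realFieldType) (lam gam : nat -> R) (r i : nat) : R :=
  lam r * \prod_(i.+1 <= j < r.+1) gam j.

Definition Lam (R : realFieldType) (Rn : nat) (lam gam : nat -> R) (i : nat) : R :=
  \sum_(i <= r < Rn.+1) Gcoef lam gam r i.

(* Main.v *)
Require Import Defs.
From mathcomp Require Import all_boot all_order all_algebra.
Import Order.TTheory GRing.Theory Num.Theory.
Local Open Scope ring_scope.

Definition Bnd {R : realFieldType} (gam a : nat -> R) (r : nat) : R :=
  \sum_(1 <= i < r.+1) (\prod_(i.+1 <= j < r.+1) gam j) * a i.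

Lemma Bnd_S (R : realFieldType) (gam a : nat -> R) (r : nat) :
  Bnd gam a r.+1 = gam r.+1 * Bnd gam a r + a r.+1.
Proof.
rewrite /Bnd big_nat_recr //= [X in _ + X * _]big_geq // mul1r; congr (_ + _).
rewrite big_distrr /=; apply: eq_big_nat => i /andP [_ hi].
by rewrite big_nat_recr //= mulrA [gam _ * _]mulrC.
Qed.

Lemma Lbound (R : realFieldType) (Rn : nat) (L Lhat eps gam : nat -> R)
    (hgam : forall r, (1 <= r <= Rn)%N -> 0 <= gam r)
    (hround1 : (1 <= Rn)%N -> L 1%N <= Lhat 1%N + eps 1%N)
    (hround : forall r, (2 <= r <= Rn)%N ->
       L r <= Lhat r + eps r + gam r * L r.-1) :
  forall r, (1 <= r <= Rn)%N -> L r <= Bnd gam (fun i => Lhat i + eps i) r.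
Proof.
elim=> [//|r IH] /andP [_ hr].
case: r IH hr => [|r] IH hr.
  by rewrite /Bnd big_nat1 big_geq // mul1r; apply: hround1.
rewrite Bnd_S.
apply: le_trans (hround r.+2 _) _; first by rewrite hr.
rewrite /= [X in _ <= X]addrC lerD2l; apply: ler_wpM2l.
  by apply: hgam; rewrite hr.
by apply: IH; rewrite /= ltnW.
Qed.

Lemma sum_eq (R : realFieldType) (gam lam a : nat -> R) (n : nat) :
  \sum_(1 <= r < n.+1) lam r * Bnd gam a r
  = \sum_(1 <= i < n.+1) Lam n lam gam i * a i.
Proof.
elim: n => [|n IH]; first by rewrite !big_geq.
rewrite big_nat_recr //= IH [in RHS]big_nat_recr //=.
rewrite /Lam big_nat1 /Bnd big_distrr [X in _ + X]big_nat_recr //= addrA.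
congr (_ + _).
  rewrite -big_split /=; apply: eq_big_nat => i /andP [_ hi].
  rewrite [X in _ = X * _]big_nat_recr /=; last by rewrite ltnW.
  by rewrite mulrDl /Gcoef mulrA.
by rewrite /Gcoef mulrA.
Qed.

Theorem theorem6p2 (R : realFieldType) (Rn : nat)
    (L Lhat eps gam lam : nat -> R)
    (heps : forall r, (1 <= r <= Rn)%N -> 0 <= eps r)
    (hgam : forall r, (1 <= r <= Rn)%N -> 0 <= gam r)
    (hlam : forall r, (1 <= r <= Rn)%N -> 0 <= lam r)
    (hlam1 : \sum_(1 <= r < Rn.+1) lam r = 1)
    (hround1 : (1 <= Rn)%N -> L 1%N <= Lhat 1%N + eps 1%N)
    (hround : forall r, (2 <= r <= Rn)%N ->
       L r <= Lhat r + eps r + gam r * L r.-1) :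
  \sum_(1 <= r < Rn.+1) lam r * L r
    <= \sum_(1 <= i < Rn.+1) Lam Rn lam gam i * (Lhat i + eps i).
Proof.
rewrite -sum_eq; apply: ler_sum_nat => r /andP [h1 h2].
have hr : (1 <= r <= Rn)%N by rewrite h1 -ltnS.
apply: ler_wpM2l; first exact: hlam.
exact: (@Lbound R Rn L Lhat eps gam hgam hround1 hround r hr).
Qed.
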